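(* Let $\bar{\mathcal{G}}=(\bar{\mathcal{V}},\bar{\mathcal{E}})$ be the edge localization graph of the communication graph $\mathcal{G}$ (as defined in the context). If $\bar{\mathcal{G}}$ has an oriented spanning tree with root vertex $r$, then its directed line graph $L(\bar{\mathcal{G}})=(\bar{\mathcal{E}},L(\bar{\mathcal{E}}))$ has an oriented spanning tree with root edge $(r,v)$ for each neighbor $v$ of $r$ in $\bar{\mathcal{G}}$.
   Context: Setting. There are $N$ agents $\mathcal{V}=\{1,\dots,N\}$ in the plane. A set $\mathcal{S}$ of subtended angle measurements is given: an element $\alpha^{u}_{wv}\in\mathcal{S}$ (with $u,v,w$ distinct agents) is the counterclockwise angle in $[-\pi,\pi)$ measured at agent $u$ from the direction of agent $v$ to the direction of agent $w$; $\alpha^{u}_{wv}\in\mathcal{S}$ if and only if $\alpha^{u}_{vw}=-\alpha^{u}_{wv}\in\mathcal{S}$. The communication graph $\mathcal{G}=(\mathcal{V},\mathcal{E})$ is the directed graph whose edges are exactly the ordered pairs $(u,v),(v,u),(u,w),(w,u)$ for all $\alpha^{u}_{wv}\in\mathcal{S}$; it is symmetric and is assumed connected. Edge localization graph. For each edge $(u,v)\in\mathcal{E}$ such that there is no $w$ with $\alpha^{v}_{wu}\in\mathcal{S}$, introduce a new virtual vertex $\bar v^{u}$ (distinct for distinct such pairs $(u,v)$; co-located with agent $v$). Let $\mathcal{E}^{u}=\{(u,\bar v^{u}),(\bar v^{u},u) : (u,v)\in\mathcal{E},\ \nexists w \text{ with } \alpha^{v}_{wu}\in\mathcal{S}\}$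 and $\mathcal{V}^{u}$ the set of all these virtual vertices. Then $\bar{\mathcal{V}}=\bigl(\mathcal{V}\setminus\{u\in\mathcal{V}: \text{no } \alpha^{u}_{wv}\in\mathcal{S} \text{ for any } v,w\}\bigr)\cup\mathcal{V}^{u}$ and $\bar{\mathcal{E}}=\bigl(\mathcal{E}\setminus\{(u,v),(v,u): (u,v)\in\mathcal{E},\ \nexists w \text{ with }\alpha^{v}_{wu}\in\mathcal{S}\}\bigr)\cup\mathcal{E}^{u}$. A neighbor of $r$ in $\bar{\mathcal{G}}$ is a vertex $v$ with $(r,v)\in\bar{\mathcal{E}}$. For a directed edge $e=(u,v)$, $t(e)=u$, $h(e)=v$. The directed line graph $L(\bar{\mathcal{G}})$ has vertex set $\bar{\mathcal{E}}$ and edge set $L(\bar{\mathcal{E}})=\{(e_1,e_2): h(e_1)=t(e_2)\}$. An oriented spanning tree of a directed graph with root $r$ is an acyclic subgraph containing all vertices in which every vertex other than $r$ has a directed path to $r$. *)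

(* Defs.v *)
From mathcomp Require Import all_boot.
Set Implicit Arguments. Unset Strict Implicit. Unset Printing Implicit Defensive.

Section Digraph.
Variable V : finType.

Definition edge_rel (F : {set V * V}) : rel V := fun a b => (a, b) \in F.

Definition und_rel (F : {set V * V}) : rel V :=
  fun a b => ((a, b) \in F) || ((b, a) \in F).

(* F is acyclic (as an undirected multigraph, where (a,b) and (b,a) are two
   distinct edges): removing any single edge disconnects its endpoints.
   In particular loops and 2-cycles (a,b),(b,a) are cycles. *)
Definition acyclic_edges (F : {set V * V}) : Prop :=
  forall e, e \in F -> ~~ connect (und_rel (F :\ e)) e.1 e.2.

Definition oriented_spanning_tree (VV : {set V}) (EE : {set V * V}) (r : V) : Prop :=
  exists F : {set V * V},
    [/\ F \subset EE, acyclic_edges F, r \in VV &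
        forall x, x \in VV -> connect (edge_rel F) x r].

Definition line_edges (EE : {set V * V}) : {set (V * V) * (V * V)} :=
  [set p | [&& p.1 \in EE, p.2 \in EE & p.1.2 == p.2.1]].
End Digraph.

Section EdgeLoc.
Variable N : nat.
Notation agent := 'I_N.
(* S : the set of subtended angle measurements; (u, w, v) \in S encodes that
   alpha^u_{wv} \in S (angle at u from direction of v to direction of w). *)
Variable S : {set agent * agent * agent}.

(* communication graph edges: (u,v),(v,u),(u,w),(w,u) for alpha^u_{wv} in S *)
Definition comm_edge (a b : agent) : bool :=
  [exists x : agent,
     [|| (a, x, b) \in S, (b, x, a) \in S, (a, b, x) \in S | (b, a, x) \in S]].

Definition sees (v u : agent) : bool := [exists w : agent, (v, w, u) \in S].

Definition measuring (u : agent) : bool :=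
  [exists v : agent, exists w : agent, (u, w, v) \in S].

(* (u,v) in E with no w such that alpha^v_{wu} in S: gives virtual vertex vbar^u *)
Definition virt (u v : agent) : bool := comm_edge u v && ~~ sees v u.

(* vertices of the edge localization graph: agents (inl u) and
   virtual vertices (inr (u, v)) standing for vbar^u *)
Definition locV := (agent + (agent * agent))%type.

Definition Vbar : {set locV} :=
  [set x : locV | match x with
                  | inl u => measuring u
                  | inr (u, v) => virt u v
                  end].

Definition removed (a b : agent) : bool := virt a b || virt b a.

Definition Ebar : {set locV * locV} :=
  [set e : locV * locV |
     match e with
     | (inl a, inl b) => comm_edge a b && ~~ removed a b
     | (inl a, inr (u, v)) => (a == u) && virt u v
     | (inr (u, v), inl a) => (a == u) && virt u v
     | (inr _, inr _) => false
     end].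
End EdgeLoc.

(* Main.v *)
Require Import Defs.
From mathcomp Require Import all_boot.

Section Gen.
Variable V : finType.
Variables (VV : {set V}) (EE : {set V * V}) (r : V).
Hypothesis rV : r \in VV.
Hypothesis EEV : forall a b, (a, b) \in EE -> b \in VV.
Hypothesis reachr : forall x, x \in VV -> connect (edge_rel EE) x r.

Fixpoint reach (n : nat) (x : V) : bool :=
  match n with
  | 0 => x == r
  | n'.+1 => (x == r) || [exists y, edge_rel EE x y && reach n' y]
  end.

Lemma reach_ex x : exists n, (x \in VV) ==> reach n x.
Proof.
case xV: (x \in VV); last by exists 0.
have /connectP [s ps E] := reachr x xV.
elim: s x ps E {xV} => [|y s IH] x /=; first by move=> _ E; exists 0; rewrite /= E eqxx.
case/andP=> exy ps E; case: (IH y ps E) => n /= Hn; exists n.+1 => /=.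
by apply/orP; right; apply/existsP; exists y; rewrite exy.
Qed.

Definition d x := ex_minn (reach_ex x).

Definition p x := if (x \in VV) && (x != r) then
   odflt x [pick y | edge_rel EE x y && reach (d x).-1 y] else x.

Lemma p_prop x : x \in VV -> x != r ->
  [/\ (x, p x) \in EE, p x \in VV & d (p x) < d x].
Proof.
move=> xV xr.
have Hd : reach (d x) x.
  by rewrite /d; case: ex_minnP => m; rewrite xV.
have : exists y, edge_rel EE x y && reach (d x).-1 y.
  move: Hd; case: (d x) => [|k] /=; first by rewrite (negbTE xr).
  by rewrite (negbTE xr) /= => /existsP.
case=> y0 Hy0.
rewrite /p xV xr /=.
case: pickP => [y /andP [exy ry]|/(_ y0)]; last by rewrite Hy0.
have yV : y \in VV := EEV _ _ exy.
split => //.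
have : d y <= (d x).-1.
  by rewrite /d; case: ex_minnP => m _ H; apply: H; rewrite yV.
move: Hd; case: (d x) => [|k] /=; first by rewrite (negbTE xr).
done.
Qed.

Lemma d_p x : d (p x) <= d x.
Proof.
case H: ((x \in VV) && (x != r)).
  by case/andP: H => xV xr; case: (p_prop _ xV xr) => _ _ /ltnW.
by rewrite /p H.
Qed.

Lemma d_fconnect y z : fconnect p y z -> d z <= d y.
Proof.
case/connectP => s; elim: s y => [|a s IH] y /=; first by move=> _ ->.
case/andP => /eqP <- ps lz; apply: leq_trans (IH _ ps lz) (d_p y).
Qed.

Lemma fconnect_step a x0 : a != x0 -> fconnect p a x0 = fconnect p (p a) x0.
Proof.
move=> ax; apply/idP/idP.
  case/connectP => [[|b s]] /=; first by move=> _ E; rewrite E eqxx in ax.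
  by case/andP => /eqP <- ps lz; apply/connectP; exists s.
by apply: connect_trans; apply: connect1 => /=.
Qed.

Lemma gen_tree : oriented_spanning_tree VV EE r.
Proof.
pose F := [set ex | [&& ex.1 \in VV, ex.1 != r & ex.2 == p ex.1]].
have inF a b : ((a, b) \in F) = [&& a \in VV, a != r & b == p a] by rewrite inE.
exists F; split => //.
- apply/subsetP => [[a b]]; rewrite inF => /and3P [aV ar /eqP ->].
  by case: (p_prop _ aV ar).
- move=> [x0 y0]; rewrite inF /= => /and3P [x0V x0r /eqP ->].
  case: (p_prop _ x0V x0r) => _ _ Hlt.
  pose D := [pred y | fconnect p y x0].
  have cl : closed (und_rel (F :\ (x0, p x0))) D.
    have key a b : (a, b) \in F :\ (x0, p x0) -> (a \in D) = (b \in D).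
      rewrite !inE /= => /andP [ne /and3P [aV ar /eqP E0]]; subst b.
      have ax : a != x0 by apply/eqP => E; rewrite E eqxx in ne.
      by rewrite /= fconnect_step.
    move=> a b /orP [] H; first exact: key.
    by rewrite (key _ _ H).
  apply/negP => C.
  have := closed_connect cl C.
  rewrite !inE /= connect0 => /esym Hc.
  by have := d_fconnect _ _ Hc; rewrite leqNgt Hlt.
- move=> x xV.
  have [n Hn] : exists n, d x <= n by exists (d x).
  elim: n x xV Hn => [|n IH] x xV Hn.
    case: (eqVneq x r) => [-> //|xr].
    by case: (p_prop _ xV xr) => _ _; rewrite (leqNgt (d x)) in Hn; move: Hn; case: (d x).
  case: (eqVneq x r) => [-> //|xr].
  case: (p_prop _ xV xr) => E pV lt.
  apply: connect_trans (connect1 _) (IH _ pV _); first by rewrite /edge_rel inF xV xr eqxx.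
  by rewrite -ltnS (leq_trans lt Hn).
Qed.
End Gen.

Lemma head_in_Vbar N (S : {set 'I_N * 'I_N * 'I_N})
  (S_sym : forall u w v : 'I_N, (u, w, v) \in S -> (u, v, w) \in S)
  a b : (a, b) \in Ebar S -> b \in Vbar S.
Proof.
rewrite !inE.
case: a => [a|[u v]]; case: b => [b|[u' v']] //.
- case/andP => ce; rewrite /removed negb_or => /andP [].
  rewrite /virt ce /= negbK.
  case/existsP => w H _; apply/existsP; exists a; apply/existsP; exists w; exact H.
- by case/andP.
- case/andP => /eqP -> /andP [/existsP [x H] ns].
  have ns' : forall w, (v, w, u) \notin S.
    by move=> w; apply/negP => Hw; move: ns; rewrite /sees; case/existsP; exists w.
  case/or4P: H => H.
  + by apply/existsP; exists v; apply/existsP; exists x.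
  + by move: (ns' x); rewrite H.
  + by apply/existsP; exists x; apply/existsP; exists v.
  + by move: (ns' x); rewrite (S_sym _ _ _ H).
Qed.

Lemma lemma5 (N : nat) (S : {set 'I_N * 'I_N * 'I_N})
  (S_distinct : forall u w v : 'I_N, (u, w, v) \in S ->
                  [&& u != v, u != w & w != v])
  (S_sym : forall u w v : 'I_N, (u, w, v) \in S -> (u, v, w) \in S)
  (G_connected : forall a b : 'I_N, connect (comm_edge S) a b)
  (r : locV N) :
  oriented_spanning_tree (Vbar S) (Ebar S) r ->
  forall v : locV N, (r, v) \in Ebar S ->
    oriented_spanning_tree (Ebar S) (line_edges (Ebar S)) (r, v).
Proof.
move=> [F [FE _ rV Fr]] v rv.
apply: gen_tree => //.
- by move=> a b; rewrite inE => /and3P [].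
- move=> [a b] ab.
  have bV := @head_in_Vbar N S S_sym _ _ ab.
  have /connectP [s ps E] : connect (edge_rel (Ebar S)) b r.
    apply: connect_sub (Fr b bV) => x y Hxy; apply: connect1.
    exact: (subsetP FE (x, y) Hxy).
  elim: s a b ab ps E {bV} => [|c s IH] a b ab /=.
    move=> _ E; apply: connect1; rewrite /edge_rel inE /= ab rv /= E.
    done.
  case/andP => bc ps E.
  apply: connect_trans (connect1 _) (IH _ _ bc ps E).
  by rewrite /edge_rel inE /= ab /= eqxx andbT.
Qed.
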